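(* Let $p\neq2$ be a prime and let $a_2,a_3,b_2,b_3$ be nonzero elements of the field $\mathbb{Z}(p)$ of integers modulo $p$ with $a_2b_3=a_3b_2$. Then there exist independent $\mathbb{Z}(p)$-valued random variables $\xi_1,\xi_2,\xi_3,\xi_4$ with nowhere-vanishing characteristic functions, with $\xi_2$ and $\xi_3$ identically distributed, and independent $\mathbb{Z}(p)$-valued random variables $\eta_1,\eta_2,\eta_3,\eta_4$ with nowhere-vanishing characteristic functions, with $\eta_2$ and $\eta_3$ identically distributed, such that $(\xi_1+a_2\xi_2+a_3\xi_3,\ b_2\xi_2+b_3\xi_3+\xi_4)$ and $(\eta_1+a_2\eta_2+a_3\eta_3,\ b_2\eta_2+b_3\eta_3+\eta_4)$ have the same distribution, but the distribution of $\eta_2$ is not equal to the distribution of $\xi_2+\alpha$ for any $\alpha\in\mathbb{Z}(p)$.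
   Context: The character group of the additive group of $\mathbb{Z}(p)$ is isomorphic to $\mathbb{Z}(p)$; write $(x,y)$ for the value of the character $y$ at $x$. The characteristic function of a $\mathbb{Z}(p)$-valued random variable $\xi$ is $y\mapsto\mathbf{E}[(\xi,y)]$ on the character group; ''nowhere-vanishing'' means it is nonzero at every $y$. *)

(* Defs.v *)
From HB Require Import structures.
From mathcomp Require Import all_boot all_order all_algebra.
From mathcomp Require Import reals trigo complex.
Set Implicit Arguments. Unset Strict Implicit. Unset Printing Implicit Defensive.
Import Order.TTheory GRing.Theory Num.Theory.
Local Open Scope ring_scope.

Section FinProb.
Variables (R : realType) (Omega : finType).

Definition is_prob (P : Omega -> R) : Prop :=
  (forall w, 0 <= P w) /\ \sum_(w : Omega) P w = 1.

Definition prob (P : Omega -> R) (A : pred Omega) : R := \sum_(w | A w) P w.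

Definition law (p : nat) (P : Omega -> R) (X : Omega -> 'F_p) (a : 'F_p) : R :=
  prob P (fun w => X w == a).

Definition indep (p n : nat) (P : Omega -> R) (X : 'I_n -> Omega -> 'F_p) : Prop :=
  forall (S : {set 'I_n}) (a : 'I_n -> 'F_p),
    prob P (fun w => [forall i in S, X i w == a i])
    = \prod_(i in S) prob P (fun w => X i w == a i).

Definition fam4 (p : nat) (X1 X2 X3 X4 : Omega -> 'F_p) : 'I_4 -> Omega -> 'F_p :=
  fun i => match val i with 0 => X1 | 1 => X2 | 2 => X3 | _ => X4 end.

Definition indep4 (p : nat) (P : Omega -> R) (X1 X2 X3 X4 : Omega -> 'F_p) : Prop :=
  indep P (fam4 X1 X2 X3 X4).

(* the character pairing (x, y) = exp(2 pi i x y / p) of Z(p) with its dual Z(p) *)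
Definition zchar (p : nat) (x y : 'F_p) : R[i] :=
  let t := (2 * pi * ((x : nat) * (y : nat))%:R / p%:R)%R in
  (cos t +i* sin t)%C.

Definition charfun (p : nat) (P : Omega -> R) (X : Omega -> 'F_p) (y : 'F_p) : R[i] :=
  \sum_(w : Omega) ((P w)%:C * zchar (X w) y)%C.

Definition charfun_nonvanishing (p : nat) (P : Omega -> R) (X : Omega -> 'F_p) : Prop :=
  forall y : 'F_p, charfun P X y != 0.

End FinProb.

(* Main.v *)
Require Import Defs.
From HB Require Import structures.
From mathcomp Require Import all_boot all_order all_algebra.
From mathcomp Require Import reals trigo complex.
From mathcomp Require Import ring lra zify.
Import Order.TTheory GRing.Theory Num.Theory.
Local Open Scope ring_scope.

Section Zeta.
Variables (R : realType) (p : nat).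
Hypothesis hp : prime p.

Definition zeta (n : nat) : R[i] :=
  (cos (2 * pi * n%:R / p%:R) +i* sin (2 * pi * n%:R / p%:R))%C.

Lemma zcharE (x y : 'F_p) : zchar R x y = zeta (x * y)%N.
Proof. by []. Qed.

Lemma p_gt0 : (0 < p)%N. Proof. exact: prime_gt0. Qed.
Lemma pR_neq0 : (p%:R : R) != 0. Proof. by rewrite pnatr_eq0 -lt0n p_gt0. Qed.

Lemma zeta0 : zeta 0 = 1.
Proof. by rewrite /zeta mulr0 mul0r cos0 sin0. Qed.

Lemma zetaD m n : zeta (m + n) = zeta m * zeta n.
Proof.
rewrite /zeta natrD mulrDr mulrDl cosD sinD.
by apply/eqP; rewrite eq_complex /=; apply/andP; split; apply/eqP; ring.
Qed.

Lemma zetap n : zeta (n + p) = zeta n.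
Proof.
rewrite /zeta.
have -> : (2 * pi * (n + p)%:R / p%:R : R) = 2 * pi * n%:R / p%:R + pi *+ 2.
  rewrite natrD mulrDr mulrDl mulfK ?pR_neq0 //; congr (_ + _).
  by rewrite mulr_natl.
by rewrite cosD2pi sinD2pi.
Qed.

Lemma zeta_mod n : zeta n = zeta (n %% p)%N.
Proof.
rewrite {1}(divn_eq n p) addnC; elim: (n %/ p)%N => [|k IH]; first by rewrite mul0n addn0.
by rewrite mulSn addnCA addnC zetap.
Qed.

Lemma zeta_neq1 n : (0 < n < p)%N -> zeta n != 1.
Proof.
move=> /andP[n0 np]; apply/negP; rewrite /zeta => /eqP /(congr1 (@complex.Re R)) /=.
pose phi : R := pi * n%:R / p%:R.
have -> : (2 * pi * n%:R / p%:R : R) = phi *+ 2 by rewrite /phi mulr2n; ring.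
rewrite cos_mulr2n => h.
have hs : 0 < sin phi.
  apply: sin_gt0_pi; apply/andP; split.
    by rewrite /phi mulr_gt0 ?mulr_gt0 ?pi_gt0 ?invr_gt0 ?ltr0n ?p_gt0.
  rewrite /phi -mulrA gtr_pMr ?pi_gt0 // ltr_pdivrMr ?ltr0n ?p_gt0 // mul1r ltr_nat //.
have : sin phi ^+ 2 = 0.
  rewrite sin2cos2; apply/eqP; rewrite subr_eq0; apply/eqP.
  have : cos phi ^+ 2 *+ 2 = 1 *+ 2 by rewrite -(subrK 1 (cos phi ^+ 2 *+ 2)) h mulr2n.
  by move/eqP; rewrite eqrMn2r /= => /eqP ->.
by move/eqP; rewrite expf_eq0 /= => /eqP hz; move: hs; rewrite hz ltxx.
Qed.

End Zeta.

Section Zeta2.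
Variables (R : realType) (p : nat).
Hypothesis hp : prime p.

Lemma vadd (x y : 'F_p) : val (x + y) = ((val x + val y) %% p)%N.
Proof. by rewrite /= {3}(Fp_cast hp). Qed.

Lemma v1 : val (1 : 'F_p) = 1%N.
Proof. by rewrite /= modn_small // Fp_cast. Qed.

Lemma val_ltp (y : 'F_p) : (val y < p)%N.
Proof. by have := ltn_ord y; rewrite {2}(Fp_cast hp). Qed.

Lemma sum_zeta (y : 'F_p) :
  \sum_(x : 'F_p) zeta R p (x * y)%N = if y == 0 then p%:R else 0.
Proof.
case: eqP => [->|/eqP y0].
  under eq_bigr do rewrite muln0 zeta0 ?pR_neq0 //.
  by rewrite sumr_const card_Fp.
set S := \sum_(x : 'F_p) _.
have hS : S = S * zeta R p y.
  rewrite {1}/S (reindex_inj (@addIr _ 1)) big_distrl; apply: eq_bigr => x _.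
  rewrite vadd v1 zeta_mod // modnMml -zeta_mod // mulnDl mul1n zetaD //.
have : S * (1 - zeta R p y) = 0 by rewrite mulrBr mulr1 -hS subrr.
move/eqP; rewrite mulf_eq0 subr_eq0 [1 == _]eq_sym (negbTE (@zeta_neq1 R p hp _ _)) ?orbF.
  by move/eqP.
by rewrite lt0n val_ltp andbT; apply: contra y0 => /eqP h; apply/eqP; apply: val_inj.
Qed.
End Zeta2.

Section Main.
Variables (R : realType) (p : nat).
Hypothesis hp : prime p.

Definition dd (x : 'F_p) : R := (if x == 0 then 1 else 0) - (if x == 1 then 1 else 0).
Definition mu (x : 'F_p) : R := p%:R^-1 * (1 + dd x).
Definition PP (w : ('F_p * 'F_p)%type) : R := mu w.1 * mu w.2.

Lemma sum_ind (a : 'F_p) : \sum_(x : 'F_p) (if x == a then 1 else 0 : R) = 1.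
Proof. by rewrite (bigD1 a) //= eqxx big1 ?addr0 // => x /negbTE ->. Qed.

Lemma sum_dd : \sum_x dd x = 0.
Proof. by rewrite sumrB !sum_ind subrr. Qed.

Lemma sum_mu : \sum_x mu x = 1.
Proof.
rewrite -mulr_sumr big_split /= sum_dd addr0 sumr_const card_Fp //.
by rewrite mulVf // pR_neq0.
Qed.

Lemma h01 : (0 : 'F_p) != 1.
Proof. by rewrite eq_sym oner_neq0. Qed.

Lemma mu_ge0 x : 0 <= mu x.
Proof.
rewrite /mu /dd mulr_ge0 ?invr_ge0 ?ler0n //.
case: (x =P 0) => [->|_]; first by rewrite (negbTE h01); lra.
by case: ifP => _; lra.
Qed.

Lemma dd1 x : dd (1 - x) = - dd x.
Proof.
have e1 : (1 - x == 0) = (x == 1) by rewrite subr_eq0 eq_sym.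
have e2 : (1 - x == 1) = (x == 0) by rewrite -subr_eq0 addrAC subrr add0r oppr_eq0.
by rewrite /dd e1 e2 opprB.
Qed.

Lemma probE (A : pred ('F_p * 'F_p)) : prob PP A = \sum_w PP w * (A w)%:R.
Proof.
rewrite /prob big_mkcond; apply: eq_bigr => w _.
by case: (A w); rewrite ?mulr1 ?mulr0.
Qed.

Lemma sum_pair (f g : 'F_p -> R) :
  \sum_(w : 'F_p * 'F_p) PP w * (f w.1 * g w.2) =
  (\sum_x mu x * f x) * (\sum_y mu y * g y).
Proof.
rewrite -(pair_big xpredT xpredT (fun x y => PP (x, y) * (f x * g y))) /=.
rewrite big_distrl; apply: eq_bigr => x _ /=; rewrite big_distrr; apply: eq_bigr => y _ /=.
by rewrite /PP /=; ring.
Qed.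

Lemma prob1 (f : 'F_p -> bool) : prob PP (fun w => f w.1) = \sum_x mu x * (f x)%:R.
Proof.
rewrite probE (eq_bigr (fun w => PP w * ((f w.1)%:R * 1))) => [|w _]; last by rewrite mulr1.
rewrite (sum_pair (fun x => (f x)%:R) (fun _ => 1)) [X in _ * X](eq_bigr mu) => [|y _]; last by rewrite mulr1.
by rewrite sum_mu mulr1.
Qed.

Lemma prob2 (f : 'F_p -> bool) : prob PP (fun w => f w.2) = \sum_x mu x * (f x)%:R.
Proof.
rewrite probE (eq_bigr (fun w => PP w * (1 * (f w.2)%:R))) => [|w _]; last by rewrite mul1r.
rewrite (sum_pair (fun _ => 1) (fun x => (f x)%:R)) [X in X * _](eq_bigr mu) => [|y _]; last by rewrite mulr1.
by rewrite sum_mu mul1r.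
Qed.


Lemma charfun1 (f : 'F_p -> 'F_p) y :
  charfun PP (fun w => f w.1) y = \sum_x real_complex R (mu x) * zchar R (f x) y.
Proof.
rewrite /charfun -(pair_big xpredT xpredT (fun x y0 => real_complex R (PP (x, y0)) * zchar R (f x) y)) /=.
apply: eq_bigr => x _.
rewrite (eq_bigr (fun y0 => real_complex R (mu y0) * (real_complex R (mu x) * zchar R (f x) y))) => [|y0 _]; last first.
  by rewrite /PP /= rmorphM /=; ring.
by rewrite -big_distrl /= -rmorph_sum sum_mu rmorph1 mul1r.
Qed.

Lemma charfun2 (f : 'F_p -> 'F_p) y :
  charfun PP (fun w => f w.2) y = \sum_x real_complex R (mu x) * zchar R (f x) y.
Proof.
rewrite /charfun -(pair_big xpredT xpredT (fun x y0 => real_complex R (PP (x, y0)) * zchar R (f y0) y)) /=.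
rewrite exchange_big /=; apply: eq_bigr => y0 _.
rewrite (eq_bigr (fun x => real_complex R (mu x) * (real_complex R (mu y0) * zchar R (f y0) y))) => [|x _]; last first.
  by rewrite /PP /= rmorphM /=; ring.
by rewrite -big_distrl /= -rmorph_sum sum_mu rmorph1 mul1r.
Qed.

Lemma sum_ind_C (z : 'F_p -> R[i]) a :
  \sum_x real_complex R (if x == a then 1 else 0) * z x = z a.
Proof.
rewrite (bigD1 a) //= eqxx rmorph1 mul1r big1 ?addr0 // => x /negbTE ->.
by rewrite rmorph0 mul0r.
Qed.

Lemma sum_mu_C (z : 'F_p -> R[i]) :
  \sum_x real_complex R (mu x) * z x =
  real_complex R (p%:R^-1) * (\sum_x z x + (z 0 - z 1)).
Proof.
rewrite (eq_bigr (fun x => real_complex R (p%:R^-1) * (z x +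
   (real_complex R (if x == 0 then 1 else 0) * z x
    - real_complex R (if x == 1 then 1 else 0) * z x)))) => [|x _]; last first.
  by rewrite /mu /dd rmorphM rmorphD rmorphB rmorph1 /=; ring.
by rewrite -mulr_sumr big_split sumrB /= !sum_ind_C.
Qed.

Lemma invol1 : involutive (fun x : 'F_p => 1 - x).
Proof. by move=> x; rewrite opprB addrC subrK. Qed.

Lemma sum_mu_C' (z : 'F_p -> R[i]) :
  \sum_x real_complex R (mu x) * z (1 - x) =
  real_complex R (p%:R^-1) * (\sum_x z x - (z 0 - z 1)).
Proof.
rewrite (reindex_inj (inv_inj invol1)) /=.
rewrite (eq_bigr (fun x => real_complex R (p%:R^-1) * (z x -
   (real_complex R (if x == 0 then 1 else 0) * z x
    - real_complex R (if x == 1 then 1 else 0) * z x)))) => [|x _]; last first.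
  by rewrite invol1 /mu dd1 /dd rmorphM rmorphD rmorphN rmorphB rmorph1 /=; ring.
by rewrite -mulr_sumr sumrB sumrB /= !sum_ind_C.
Qed.

Lemma zchar0 y : zchar R (0 : 'F_p) y = 1.
Proof. by rewrite zcharE /= mul0n zeta0. Qed.

Lemma nz_main (e : R[i]) (y : 'F_p) : (e = 1 \/ e = -1) ->
  real_complex R (p%:R^-1) * (\sum_x zchar R x y + e * (zchar R 0 y - zchar R 1 y)) != 0.
Proof.
move=> he; rewrite mulf_eq0 negb_or; apply/andP; split.
  by rewrite -(rmorph0 (real_complex R)) (inj_eq (@complexI R)) invr_eq0 pR_neq0.
have -> : \sum_(x : 'F_p) zchar R x y = \sum_(x : 'F_p) zeta R p (x * y)%N by [].
rewrite sum_zeta // zchar0 zcharE v1 // mul1n.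
have [->|y0] := eqVneq y 0.
  rewrite zeta0 subrr mulr0 addr0.
  by rewrite -(rmorph_nat (real_complex R)) -(rmorph0 (real_complex R)) (inj_eq (@complexI R)) pR_neq0.
rewrite add0r mulf_eq0 negb_or subr_eq0 [1 == _]eq_sym zeta_neq1 // ?andbT.
  by case: he => ->; rewrite ?oppr_eq0 oner_eq0.
by rewrite lt0n val_ltp // andbT; apply: contra y0 => /eqP h; apply/eqP; apply: val_inj.
Qed.

Lemma cf_id y : \sum_x real_complex R (mu x) * zchar R x y != 0.
Proof. by rewrite (sum_mu_C (fun x => zchar R x y)) -[X in _ + X]mul1r nz_main //; left. Qed.

Lemma cf_inv y : \sum_x real_complex R (mu x) * zchar R (1 - x) y != 0.
Proof.
rewrite (sum_mu_C' (fun x => zchar R x y)) -mulN1r.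
by apply: nz_main; right.
Qed.

Lemma cf_const y : \sum_x real_complex R (mu x) * zchar R (0 : 'F_p) y != 0.
Proof. by rewrite zchar0 -big_distrl /= -rmorph_sum sum_mu rmorph1 mul1r oner_eq0. Qed.


Lemma and4R (b0 b1 b2 b3 : bool) :
  ([&& b0, b1, b2 & b3])%:R = (b0%:R * b1%:R) * (b2%:R * b3%:R) :> R.
Proof. by case: b0; case: b1; case: b2; case: b3; rewrite /= ?(mul0r, mulr0, mulr1). Qed.

Lemma Kf (b : bool) (B : 'F_p -> bool) :
  (if b then \sum_x mu x * (B x)%:R else 1) = \sum_x mu x * (b ==> B x)%:R.
Proof.
case: b => //=.
by rewrite (eq_bigr mu) ?sum_mu // => x _; rewrite mulr1.
Qed.

Lemma Econst (c : R) : \sum_x mu x * c = c.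
Proof. by rewrite -mulr_suml sum_mu mul1r. Qed.

Lemma indep_gen (g1 g2 : 'F_p -> 'F_p) :
  indep4 PP (fun _ => 0) (fun w => g1 w.1) (fun w => g2 w.2) (fun _ => 0).
Proof.
rewrite /indep4 /indep => S a.
pose i0 := @Ordinal 4 0 isT. pose i1 := @Ordinal 4 1 isT.
pose i2 := @Ordinal 4 2 isT. pose i3 := @Ordinal 4 3 isT.
have forall4 : forall B : 'I_4 -> bool, [forall i in S, B i] =
   [&& (i0 \in S) ==> B i0, (i1 \in S) ==> B i1, (i2 \in S) ==> B i2 & (i3 \in S) ==> B i3].
  move=> B; apply/forallP/and4P => [H|[h0 h1 h2 h3] [[|[|[|[|//]]]] Hi]]; first by split; apply: H.
  - by have -> : Ordinal Hi = i0 by apply: val_inj.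
  - by have -> : Ordinal Hi = i1 by apply: val_inj.
  - by have -> : Ordinal Hi = i2 by apply: val_inj.
  - by have -> : Ordinal Hi = i3 by apply: val_inj.
have prod4 : forall G : 'I_4 -> R, \prod_(i < 4) G i = G i0 * G i1 * G i2 * G i3.
  move=> G; rewrite !big_ord_recl big_ord0 mulr1 !mulrA.
  by congr (G _ * G _ * G _ * G _); apply: val_inj.
pose c0 : R := ((i0 \in S) ==> (0 == a i0))%:R.
pose c3 : R := ((i3 \in S) ==> (0 == a i3))%:R.
pose B1 x := (i1 \in S) ==> (g1 x == a i1).
pose B2 x := (i2 \in S) ==> (g2 x == a i2).
rewrite probE (eq_bigr (fun w => PP w * ((c0 * (B1 w.1)%:R) * ((B2 w.2)%:R * c3)))) => [|w _]; last first.
  by rewrite forall4 /= and4R.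
rewrite (sum_pair (fun x => c0 * (B1 x)%:R) (fun y => (B2 y)%:R * c3)).
rewrite [RHS]big_mkcond prod4 /=.
rewrite (prob1 (fun _ => 0 == a i0)) (prob1 (fun x => g1 x == a i1)).
rewrite (prob2 (fun x => g2 x == a i2)) (prob1 (fun _ => 0 == a i3)).
rewrite !Kf !Econst.
rewrite (eq_bigr (fun x => c0 * (mu x * (B1 x)%:R))); last by move=> x _; rewrite mulrCA.
rewrite [X in _ * X = _](eq_bigr (fun x => (mu x * (B2 x)%:R) * c3)); last by move=> x _; rewrite mulrA.
by rewrite -mulr_sumr -mulr_suml /c0 /c3 /B1 /B2; ring.
Qed.

Lemma joint (a2 a3 b2 b3 u v : 'F_p) (ha2 : a2 != 0) (ha3 : a3 != 0)
  (hab : a2 * b3 = a3 * b2) :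
  prob PP (fun w => (0 + a2 * w.1 + a3 * w.2 == u) && (b2 * w.1 + b3 * w.2 + 0 == v))
  = prob PP (fun w => (0 + a2 * (1 - w.1) + a3 * (1 - w.2) == u)
                      && (b2 * (1 - w.1) + b3 * (1 - w.2) + 0 == v)).
Proof.
pose c := a3 / a2.
have c0 : c != 0 by rewrite /c mulf_neq0 ?invr_neq0.
pose F s := (a2 * s == u) && (b2 * s == v).
have hb3 : b3 = a3 * b2 / a2 by rewrite -hab mulrC mulKf.
have hE : forall x y, ((0 + a2 * x + a3 * y == u) && (b2 * x + b3 * y + 0 == v)) = F (x + c * y).
  move=> x y; have e1 : a2 * (x + c * y) = 0 + a2 * x + a3 * y by rewrite /c; field.
  have e2 : b2 * (x + c * y) = b2 * x + b3 * y + 0 by rewrite /c hb3; field.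
  by rewrite /F e1 e2.
pose sig (w : 'F_p * 'F_p) := (1 - w.1, 1 - w.2).
have invs : involutive sig by move=> [x y]; rewrite /sig /= !invol1.
rewrite !probE [RHS](reindex_inj (inv_inj invs)) /=.
rewrite (eq_bigr (fun w => PP w * (F (w.1 + c * w.2))%:R)) => [|w _]; last by rewrite hE.
rewrite [RHS](eq_bigr (fun w => PP (sig w) * (F (w.1 + c * w.2))%:R)) => [|w _]; last first.
  by rewrite /sig /= !invol1 hE.
apply/eqP; rewrite -subr_eq0 -sumrB.
rewrite (eq_bigr (fun w => (2 / (p%:R ^+ 2)) * (dd w.1 * (F (w.1 + c * w.2))%:R
                       + dd w.2 * (F (w.1 + c * w.2))%:R))) => [|w _]; last first.
  rewrite /PP /sig /mu /= !dd1; field; exact: pR_neq0.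
rewrite -mulr_sumr big_split /= mulf_eq0; apply/orP; right.
have N1 : forall x, \sum_y (F (x + c * y))%:R = \sum_s (F s)%:R :> R.
  move=> x; have hinj : injective (fun y => x + c * y).
    by move=> y1 y2 /= /addrI /(mulfI c0).
  by rewrite [RHS](reindex_inj hinj).
have N2 : forall y, \sum_x (F (x + c * y))%:R = \sum_s (F s)%:R :> R.
  by move=> y; rewrite [RHS](reindex_inj (@addIr _ (c * y))).
rewrite -(pair_big xpredT xpredT (fun x y => dd x * (F (x + c * y))%:R)) /=.
rewrite -(pair_big xpredT xpredT (fun x y => dd y * (F (x + c * y))%:R)) /=.
rewrite [X in _ + X]exchange_big /=.
rewrite (eq_bigr (fun x => dd x * \sum_s (F s)%:R)) => [|x _]; last by rewrite -(N1 x) mulr_sumr.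
rewrite [X in _ + X](eq_bigr (fun y => dd y * \sum_s (F s)%:R)) => [|y _]; last by rewrite -(N2 y) mulr_sumr.
by rewrite -!mulr_suml sum_dd mul0r addr0.
Qed.

Lemma m1n1 (hp2 : p != 2%N) : (-1 : 'F_p) != 1.
Proof.
apply/eqP => h.
have h2 : (2%:R : 'F_p) = 0 by rewrite mulr2n -{1}h addNr.
have := congr1 (@nat_of_ord _) h2; rewrite val_Fp_nat //= => hd.
have hd' : (p %| 2)%N by rewrite /dvdn hd.
have := dvdn_leq (isT : (0 < 2)%N) hd'; have := prime_gt1 hp.
by move: hp2; rewrite -!(rwP eqP); lia.
Qed.

Lemma sum_mu_eq (b : 'F_p) : \sum_x mu x * (x == b)%:R = mu b.
Proof.
rewrite (bigD1 b) //= eqxx mulr1 big1 ?addr0 // => x /negbTE ->.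
by rewrite mulr0.
Qed.

Lemma notshift (hp2 : p != 2%N) (alpha : 'F_p) :
  exists a, law PP (fun w => 1 - w.1) a <> law PP (fun w => w.1 + alpha) a.
Proof.
have L1 : forall a, law PP (fun w => 1 - w.1) a = mu (1 - a).
  move=> a; rewrite /law (prob1 (fun x => 1 - x == a)) -sum_mu_eq; apply: eq_bigr => x _.
  by rewrite (can2_eq invol1 invol1).
have L2 : forall a, law PP (fun w => w.1 + alpha) a = mu (a - alpha).
  move=> a; rewrite /law (prob1 (fun x => x + alpha == a)) -sum_mu_eq; apply: eq_bigr => x _.
  by rewrite (can2_eq (addrK alpha) (subrK alpha)).
have muI : forall u v, mu u = mu v -> dd u = dd v.
  by move=> u v; rewrite /mu => /(mulfI (invr_neq0 (@pR_neq0 R p hp))) /addrI.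
have [ha|a1] := eqVneq alpha 1.
  exists 0; rewrite L1 L2 ha => /muI; rewrite subr0 sub0r /dd eqxx oner_eq0.
  rewrite oppr_eq0 oner_eq0 (negbTE (m1n1 hp2)) /=; lra.
exists 1; rewrite L1 L2 => /muI; rewrite subrr /dd eqxx (negbTE h01).
have -> : (1 - alpha == 0) = false by rewrite subr_eq0 eq_sym (negbTE a1).
by case: ifP => _; lra.
Qed.

End Main.

Theorem proposition4p2 (R : realType) (p : nat) (hp : prime p) (hp2 : p != 2%N)
  (a2 a3 b2 b3 : 'F_p) (ha2 : a2 != 0) (ha3 : a3 != 0) (hb2 : b2 != 0) (hb3 : b3 != 0)
  (hab : a2 * b3 = a3 * b2) :
  exists (Omega : finType) (P : Omega -> R)
         (xi1 xi2 xi3 xi4 eta1 eta2 eta3 eta4 : Omega -> 'F_p),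
    [/\ is_prob P /\ indep4 P xi1 xi2 xi3 xi4 /\ indep4 P eta1 eta2 eta3 eta4,
        [/\ charfun_nonvanishing P xi1, charfun_nonvanishing P xi2,
            charfun_nonvanishing P xi3 & charfun_nonvanishing P xi4]
        /\ [/\ charfun_nonvanishing P eta1, charfun_nonvanishing P eta2,
            charfun_nonvanishing P eta3 & charfun_nonvanishing P eta4],
        (forall a, law P xi2 a = law P xi3 a) /\ (forall a, law P eta2 a = law P eta3 a),
        (forall u v : 'F_p,
           prob P (fun w => (xi1 w + a2 * xi2 w + a3 * xi3 w == u)
                            && (b2 * xi2 w + b3 * xi3 w + xi4 w == v))
           = prob P (fun w => (eta1 w + a2 * eta2 w + a3 * eta3 w == u)
                              && (b2 * eta2 w + b3 * eta3 w + eta4 w == v)))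
      & forall alpha : 'F_p,
          exists a, law P eta2 a <> law P (fun w => xi2 w + alpha) a].
Proof.
exists ('F_p * 'F_p)%type, (PP R p).
exists (fun _ => 0), (fun w => w.1), (fun w => w.2), (fun _ => 0).
exists (fun _ => 0), (fun w => 1 - w.1), (fun w => 1 - w.2), (fun _ => 0).
split.
- split; [|split].
  + split; first by move=> w; apply: mulr_ge0; apply: mu_ge0.
    have := prob1 R p hp (fun _ => true); rewrite /prob /= => ->.
    by rewrite (eq_bigr (mu R p)) ?sum_mu // => x _; rewrite mulr1.
  + exact: (indep_gen R p hp (fun x => x) (fun x => x)).
  + exact: (indep_gen R p hp (fun x => 1 - x) (fun x => 1 - x)).
- split; split => y.
  + by rewrite (charfun1 R p hp (fun _ => 0)); apply: cf_const.
  + by rewrite (charfun1 R p hp (fun x => x)); apply: cf_id.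
  + by rewrite (charfun2 R p hp (fun x => x)); apply: cf_id.
  + by rewrite (charfun1 R p hp (fun _ => 0)); apply: cf_const.
  + by rewrite (charfun1 R p hp (fun _ => 0)); apply: cf_const.
  + by rewrite (charfun1 R p hp (fun x => 1 - x)); apply: cf_inv.
  + by rewrite (charfun2 R p hp (fun x => 1 - x)); apply: cf_inv.
  + by rewrite (charfun1 R p hp (fun _ => 0)); apply: cf_const.
- split => a; rewrite /law.
  + by rewrite (prob1 R p hp (fun x => x == a)) (prob2 R p hp (fun x => x == a)).
  + by rewrite (prob1 R p hp (fun x => 1 - x == a)) (prob2 R p hp (fun x => 1 - x == a)).
- by move=> u v; apply: (joint R p hp).
- by move=> alpha; apply: notshift.
Qed.
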